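(* Let $R$ be a ring such that $\operatorname{Nil}^*(R)=0$ and $R$ satisfies Köthe's conjecture, and suppose that $xy\in\operatorname{Nil}(R)$ for all $x,y\in\operatorname{Nil}(R)$ with $x^2=y^2=0$. Then $\operatorname{Nil}(R)$ is multiplicatively closed.
   Context: Rings are associative and not necessarily unital. $\operatorname{Nil}(R)$ is the set of nilpotent elements of $R$; $\operatorname{Nil}^*(R)$ is the upper nilradical, the sum of all nil two-sided ideals of $R$. $R$ satisfies Köthe's conjecture if every nil left ideal of $R$ is contained in a nil two-sided ideal. *)

(* Defs.v *)
(* Possibly non-unital associative rings are modelled as an
   additive abelian group (zmodType) with an associative, biadditive
   multiplication given explicitly. *)
From HB Require Import structures.
From mathcomp Require Import all_boot all_algebra.
Set Implicit Arguments. Unset Strict Implicit. Unset Printing Implicit Defensive.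
Import GRing.Theory.
Local Open Scope ring_scope.

Section Rng.
Variables (R : zmodType) (mul : R -> R -> R).

Record is_rng : Prop := IsRng {
  rng_mulA : forall x y z, mul x (mul y z) = mul (mul x y) z;
  rng_mulDl : forall x y z, mul (x + y) z = mul x z + mul y z;
  rng_mulDr : forall x y z, mul x (y + z) = mul x y + mul x z }.

(* rpow x n = x^(n+1) (no unit needed) *)
Fixpoint rpow (x : R) (n : nat) : R :=
  match n with O => x | S n' => mul x (rpow x n') end.

Definition nilpotent_el (x : R) : Prop := exists n, rpow x n = 0.

Definition additive_subgroup (I : R -> Prop) : Prop :=
  I 0 /\ (forall x y, I x -> I y -> I (x - y)).

Definition left_ideal (I : R -> Prop) : Prop :=
  additive_subgroup I /\ (forall r x, I x -> I (mul r x)).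

Definition two_sided_ideal (I : R -> Prop) : Prop :=
  left_ideal I /\ (forall r x, I x -> I (mul x r)).

Definition nil_set (I : R -> Prop) : Prop := forall x, I x -> nilpotent_el x.

(* Nil^*(R): the sum of all nil two-sided ideals, i.e. the set of finite sums
   of elements each lying in some nil two-sided ideal *)
Definition upper_nilradical (x : R) : Prop :=
  exists s : seq R,
    (forall y, y \in s -> exists I, [/\ two_sided_ideal I, nil_set I & I y])
    /\ x = \sum_(y <- s) y.

Definition koethe : Prop :=
  forall L, left_ideal L -> nil_set L ->
    exists I, [/\ two_sided_ideal I, nil_set I & forall x, L x -> I x].

End Rng.

(* Main.v *)
Require Import Defs.
From mathcomp Require Import all_boot all_algebra.
From mathcomp Require Import zify.
Local Open Scope ring_scope.
Import GRing.Theory.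

Fixpoint alt {R : zmodType} (mul : R -> R -> R) (x y : R) (t : nat) : R :=
  match t with O => x | S t' => mul (alt mul x y t') (mul y x) end.

Theorem lemma2p5 (R : zmodType) (mul : R -> R -> R) (hR : is_rng mul)
  (hNil : forall x, upper_nilradical mul x -> x = 0)
  (hK : koethe mul)
  (hsq : forall x y, nilpotent_el mul x -> nilpotent_el mul y ->
           mul x x = 0 -> mul y y = 0 -> nilpotent_el mul (mul x y)) :
  forall x y, nilpotent_el mul x -> nilpotent_el mul y ->
    nilpotent_el mul (mul x y).
Proof.
have hA := rng_mulA hR. have hDl := rng_mulDl hR. have hDr := rng_mulDr hR.
have mul0l : forall x, mul 0 x = 0.
  move=> x; have h := hDl 0 0 x; rewrite addr0 in h.
  by apply: (addrI (mul 0 x)); rewrite addr0 -h.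
have mulr0 : forall x, mul x 0 = 0.
  move=> x; have h := hDr x 0 0; rewrite addr0 in h.
  by apply: (addrI (mul x 0)); rewrite addr0 -h.
have mulBl : forall x y z, mul (x - y) z = mul x z - mul y z.
  move=> x y z; have := hDl (x - y) y z; rewrite subrK => ->; by rewrite addrK.
have mulBr : forall x y z, mul z (x - y) = mul z x - mul z y.
  move=> x y z; have := hDr z (x - y) y; rewrite subrK => ->; by rewrite addrK.
have rpowS : forall x n, rpow mul x n.+1 = mul x (rpow mul x n) by [].
have rpow_ge : forall x k j, rpow mul x k = 0 -> (k <= j)%N -> rpow mul x j = 0.
  move=> x k j hk /subnK <-; elim: (j - k)%N => [|p IH] //.
  by rewrite addSn rpowS IH mulr0.
have rpow_add : forall x a b,
    mul (rpow mul x a) (rpow mul x b) = rpow mul x (a + b).+1.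
  move=> x; elim=> [|a IH] b //.
  by rewrite rpowS -hA IH addSn.
have killL : forall z, (forall s, nilpotent_el mul (mul s z)) -> z = 0.
  move=> z hz.
  have inI : forall w (I : R -> Prop), two_sided_ideal mul I ->
      nil_set mul I -> I w -> w = 0.
    move=> w I h1 h2 h3; apply: hNil; exists [:: w]; split;
      last by rewrite big_cons big_nil addr0.
    by move=> y'; rewrite inE => /eqP ->; exists I.
  have h1 : forall s, mul s z = 0.
    pose L := fun w => exists s, w = mul s z.
    have hL : left_ideal mul L.
      split; first split.
      - by exists 0; rewrite mul0l.
      - by move=> _ _ [a ->] [b ->]; exists (a - b); rewrite mulBl.
      - by move=> r _ [a ->]; exists (mul r a); rewrite hA.
    have nL : nil_set mul L by move=> _ [a ->].
    case: (hK L hL nL) => I [h2 h3 h4].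
    by move=> s; apply: (inI _ I h2 h3); apply: h4; exists s.
  pose L := fun w => forall r, mul r w = 0.
  have hL : left_ideal mul L.
    split; first split.
    - by move=> r; rewrite mulr0.
    - by move=> a b ha hb r; rewrite mulBr ha hb subrr.
    - by move=> r' w hw r; rewrite hA hw.
  have nL : nil_set mul L by move=> w hw; exists 1%N; rewrite /= hw.
  case: (hK L hL nL) => I [h2 h3 h4].
  exact: (inI _ I h2 h3 (h4 _ h1)).
have cyc : forall a b, nilpotent_el mul (mul a b) -> nilpotent_el mul (mul b a).
  have key : forall a b n,
      rpow mul (mul b a) n.+1 = mul (mul b (rpow mul (mul a b) n)) a.
    move=> a b; elim=> [|n IH]; first by rewrite /= !hA.
    by rewrite (rpowS (mul b a) n.+1) IH (rpowS (mul a b) n) !hA.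
  by move=> a b [n hn]; exists n.+1; rewrite key hn mulr0 mul0l.
have sq0nil : forall a, mul a a = 0 -> nilpotent_el mul a.
  by move=> a ha; exists 1%N.
have SW : forall u v s, mul v u = 0 -> mul (mul (mul u s) v) (mul (mul u s) v) = 0.
  move=> u v s h.
  have -> : mul (mul (mul u s) v) (mul (mul u s) v) = mul (mul (mul u s) (mul v u)) (mul s v) by rewrite !hA.
  by rewrite h mulr0 mul0l.
have L1 : forall a b, mul a a = 0 -> mul b b = 0 -> mul (mul a b) a = 0.
  move=> a b ha hb; apply: killL => s.
  have E : mul s (mul (mul a b) a) = mul (mul s a) (mul b a) by rewrite !hA.
  rewrite E; apply: cyc.
  have -> : mul (mul b a) (mul s a) = mul b (mul (mul a s) a) by rewrite !hA.
  have he := SW a a s ha.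
  apply: hsq => //; [exact: sq0nil | exact: sq0nil].
have L2 : forall y a, nilpotent_el mul y -> mul a a = 0 -> mul (mul a y) a = 0.
  move=> y a [k hk] ha.
  suff H : forall d j, (k <= j + d)%N -> forall a, mul a a = 0 ->
      mul (mul a (rpow mul y j)) a = 0 by exact: (H k 0%N _ a ha).
  elim=> [|d IH] j hj b hb.
    rewrite addn0 in hj; by rewrite (rpow_ge _ _ _ hk hj) mulr0 mul0l.
  apply: killL => s.
  have he := SW b b s hb.
  have hYY := rpow_add y j j.
  have hw : mul (mul (mul (rpow mul y j) (mul (mul b s) b)) (rpow mul y j))
                (mul (mul (rpow mul y j) (mul (mul b s) b)) (rpow mul y j)) = 0.
    have -> : mul (mul (mul (rpow mul y j) (mul (mul b s) b)) (rpow mul y j))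
                (mul (mul (rpow mul y j) (mul (mul b s) b)) (rpow mul y j))
       = mul (mul (rpow mul y j) (mul (mul (mul (mul b s) b) (mul (rpow mul y j) (rpow mul y j))) (mul (mul b s) b))) (rpow mul y j) by rewrite !hA.
    rewrite hYY IH ?mulr0 ?mul0l //; lia.
  have h3 := L1 _ _ he hw.
  have hn : nilpotent_el mul (mul (rpow mul y j) (mul (mul b s) b)).
    exists 2%N; rewrite /=.
    set Y := rpow mul y j.
    have -> : mul (mul Y (mul (mul b s) b)) (mul (mul Y (mul (mul b s) b)) (mul Y (mul (mul b s) b)))
      = mul Y (mul (mul (mul (mul b s) b) (mul (mul Y (mul (mul b s) b)) Y)) (mul (mul b s) b)) by rewrite !hA.
    by rewrite h3 mulr0.
  have E1 : mul s (mul (mul b (rpow mul y j)) b) = mul (mul s b) (mul (rpow mul y j) b) by rewrite !hA.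
  rewrite E1; apply: cyc.
  have -> : mul (mul (rpow mul y j) b) (mul s b) = mul (rpow mul y j) (mul (mul b s) b) by rewrite !hA.
  exact: hn.
have GL : forall y u v, nilpotent_el mul y -> mul v u = 0 -> mul (mul v y) u = 0.
  move=> y u v hy hvu; apply: killL => s.
  have E1 : mul s (mul (mul v y) u) = mul (mul s v) (mul y u) by rewrite !hA.
  rewrite E1; apply: cyc.
  have -> : mul (mul y u) (mul s v) = mul y (mul (mul u s) v) by rewrite !hA.
  have he := SW u v s hvu.
  exists 1%N; rewrite /=.
  have -> : mul (mul y (mul (mul u s) v)) (mul y (mul (mul u s) v)) =
     mul y (mul (mul (mul (mul u s) v) y) (mul (mul u s) v)) by rewrite !hA.
  by rewrite L2 // mulr0.
move=> x y [n0 hx] hy.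
have D : forall t i, (n0 <= i + 1 + t)%N -> mul (alt mul x y t) (rpow mul x i) = 0.
  elim=> [|t IH] i hi.
    rewrite /= -rpowS; apply: (rpow_ge _ _ _ hx); lia.
  have -> : mul (alt mul x y t.+1) (rpow mul x i) = mul (mul (alt mul x y t) y) (rpow mul x i.+1)
    by rewrite rpowS /= !hA.
  apply: GL => //; apply: IH; lia.
have hAx : forall t, mul (mul x y) (alt mul x y t) = alt mul x y t.+1.
  elim=> [|t IH] /=; first by rewrite hA.
  by rewrite hA IH.
have hP : forall t, rpow mul (mul x y) t = mul (alt mul x y t) y.
  elim=> [|t IH] //.
  by rewrite rpowS IH hA hAx.
exists n0.+1; rewrite hP /=.
have h0 : mul (mul (alt mul x y n0) y) x = 0 := GL y x (alt mul x y n0) hy (D n0 0%N (leqnSn _)).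
have -> : mul (mul (alt mul x y n0) (mul y x)) y = mul (mul (mul (alt mul x y n0) y) x) y by rewrite !hA.
by rewrite h0 mul0l.
Qed.
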